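(* Let $(R,I)$ be a bounded prism, $(A,J)$ a $\delta$-pair over $(R,I)$, and $g:(A,J)\to(D,ID)$ a bounded prismatic envelope of $(A,J)$ over $(R,I)$. Let $\alpha,\beta\in A$ with $\delta(\alpha)=\alpha\beta$. Then every $\alpha$-derivation $\partial$ of $A$ over $R$ which is $\delta$-compatible with respect to $\beta$ and satisfies $\partial(J)\subset J$ extends uniquely to a $g(\alpha)$-derivation $\partial'$ of $D$ over $R$, $\delta$-compatible with respect to $g(\beta)$ (i.e. with $\partial'\circ g=g\circ\partial$).
   Context: $p$ a fixed prime; $\delta$-rings: $\delta(0)=\delta(1)=0$, $\delta(x+y)=\delta(x)+\delta(y)-\sum_{i=1}^{p-1}\frac1p\binom pi x^iy^{p-i}$, $\delta(xy)=\delta(x)y^p+x^p\delta(y)+p\delta(x)\delta(y)$, $\varphi(x)=x^p+p\delta(x)$. $\delta$-pairs: $\delta$-rings with ideals; morphisms: $\delta$-maps preserving ideals. Bounded prism: $(R,I)$ with $I$ invertible, $R$ $(pR+I)$-adically complete separated, $p\in I+\varphi(I)R$, $(R/I)[p^\infty]=(R/I)[p^N]$ for some $N$. A bounded prismatic envelope of $(A,J)$ over $(R,I)$ is a bounded prism $(D,ID)$ over $(R,I)$ with a morphism $g:(A,J)\to(D,ID)$ over $(R,I)$ through which every morphism of $\delta$-pairs $(A,J)\to(B,IB)$ over $(R,I)$ into a bounded prism factors uniquely. An $\alpha$-derivation over $R$ is an $R$-linear $\partial$ with $\partial(1)=0$, $\partial(xy)=\partial(x)y+x\partial(y)+\alpha\partial(x)\partial(y)$;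 it is $\delta$-compatible with respect to $\beta$ (with $\delta(\alpha)=\alpha\beta$) if $\partial(\delta x)=(\alpha^{p-1}+p\beta)\delta(\partial x)+\beta(\partial x)^p-\sum_{\nu=1}^{p-1}\frac1p\binom p\nu x^{p-\nu}\alpha^{\nu-1}(\partial x)^\nu$ for all $x$. *)

(* Defs.v *)
From HB Require Import structures.
From mathcomp Require Import all_boot all_order all_algebra.
Set Implicit Arguments. Unset Strict Implicit. Unset Printing Implicit Defensive.
Import GRing.Theory.
Local Open Scope ring_scope.

Section Defs.
Variable p : nat.

Definition binp (A : comPzRingType) (i : nat) : A := ('C(p, i) %/ p)%N%:R.

Definition is_delta (A : comPzRingType) (d : A -> A) : Prop :=
  [/\ d 0 = 0, d 1 = 0,
      (forall x y, d (x + y) =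
         d x + d y - \sum_(1 <= i < p) binp A i * x ^+ i * y ^+ (p - i))
    & (forall x y, d (x * y) =
         d x * y ^+ p + x ^+ p * d y + p%:R * d x * d y)].

Definition frob (A : comPzRingType) (d : A -> A) (x : A) : A :=
  x ^+ p + p%:R * d x.

Definition is_delta_map (A B : comPzRingType) (dA : A -> A) (dB : B -> B)
  (f : A -> B) : Prop := forall x, f (dA x) = dB (f x).

Definition is_ideal (A : comPzRingType) (J : A -> Prop) : Prop :=
  [/\ J 0, (forall x y, J x -> J y -> J (x + y))
    & (forall a x, J x -> J (a * x))].

Definition ideal_span (A : comPzRingType) (S : A -> Prop) : A -> Prop :=
  fun x => exists s : seq (A * A),
    (forall ab, ab \in s -> S ab.2) /\ x = \sum_(ab <- s) ab.1 * ab.2.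

Fixpoint ideal_pow (A : comPzRingType) (K : A -> Prop) (n : nat) : A -> Prop :=
  match n with
  | 0%N => fun _ => True
  | n'.+1 => ideal_span (fun y => exists a b, K a /\ ideal_pow K n' b /\ y = a * b)
  end.

(* A is K-adically separated and complete: A -> lim A/K^n is bijective *)
Definition adically_complete (A : comPzRingType) (K : A -> Prop) : Prop :=
  (forall x, (forall n, ideal_pow K n x) -> x = 0) /\
  (forall u : nat -> A, (forall n, ideal_pow K n (u n.+1 - u n)) ->
     exists x, forall n, ideal_pow K n (x - u n)).

(* I is an invertible ideal (defines an effective Cartier divisor): there is a
   Zariski cover by standard opens D(f_k) on which I is generated by a
   nonzerodivisor d_k, i.e. I[1/f_k] = d_k R[1/f_k] and d_k is a
   nonzerodivisor in R[1/f_k] (written without localizations). *)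
Definition invertible_ideal (A : comPzRingType) (I : A -> Prop) : Prop :=
  exists fs : seq (A * A * A),
    (* fs = list of (f_k, c_k, d_k) with sum c_k f_k = 1 *)
    \sum_(t <- fs) t.1.2 * t.1.1 = 1 /\
    forall t, t \in fs ->
      [/\ I t.2,
          (forall x, I x -> exists (m : nat) (y : A), t.1.1 ^+ m * x = y * t.2)
        & (forall y, t.2 * y = 0 -> exists m : nat, t.1.1 ^+ m * y = 0)].

Definition is_bounded_prism (A : comPzRingType) (d : A -> A) (I : A -> Prop)
  : Prop :=
  is_delta d /\ is_ideal I /\ invertible_ideal I /\
      adically_complete (ideal_span (fun y => y = p%:R \/ I y)) /\
      ideal_span (fun y => I y \/ exists i, I i /\ y = frob d i) p%:R
    /\ exists N : nat, forall x : A,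
        (exists m : nat, I (p%:R ^+ m * x)) -> I (p%:R ^+ N * x).

Definition ext_ideal (R B : comPzRingType) (f : R -> B) (I : R -> Prop)
  : B -> Prop := ideal_span (fun y => exists r, I r /\ y = f r).

Definition is_delta_pair_over (R A : comPzRingType) (dR : R -> R) (I : R -> Prop)
  (dA : A -> A) (fA : {rmorphism R -> A}) (J : A -> Prop) : Prop :=
  [/\ is_delta dA, is_ideal J, is_delta_map dR dA fA
    & forall r, I r -> J (fA r)].

Definition is_bounded_prism_over (R B : comPzRingType) (dR : R -> R)
  (I : R -> Prop) (dB : B -> B) (fB : {rmorphism R -> B}) : Prop :=
  is_bounded_prism dB (ext_ideal fB I) /\ is_delta_map dR dB fB.

Definition is_bounded_prismatic_envelope (R A D : comPzRingType)
  (dR : R -> R) (I : R -> Prop) (dA : A -> A) (fA : {rmorphism R -> A})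
  (J : A -> Prop) (dD : D -> D) (fD : {rmorphism R -> D})
  (g : {rmorphism A -> D}) : Prop :=
  [/\ is_bounded_prism_over dR I dD fD,
      is_delta_map dA dD g,
      (forall r, g (fA r) = fD r),
      (forall x, J x -> ext_ideal fD I (g x))
    & forall (B : comPzRingType) (dB : B -> B) (fB : {rmorphism R -> B})
             (h : {rmorphism A -> B}),
        is_bounded_prism_over dR I dB fB ->
        is_delta_map dA dB h ->
        (forall r, h (fA r) = fB r) ->
        (forall x, J x -> ext_ideal fB I (h x)) ->
        exists h' : {rmorphism D -> B},
          [/\ is_delta_map dD dB h', (forall r, h' (fD r) = fB r),
              (forall x, h' (g x) = h x)
            & forall h'' : {rmorphism D -> B},
                is_delta_map dD dB h'' -> (forall r, h'' (fD r) = fB r) ->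
                (forall x, h'' (g x) = h x) -> forall y, h'' y = h' y]].

Definition is_alpha_derivation (R A : comPzRingType) (f : R -> A) (alpha : A)
  (der : A -> A) : Prop :=
  [/\ (forall x y, der (x + y) = der x + der y),
      (forall r x, der (f r * x) = f r * der x),
      der 1 = 0
    & forall x y, der (x * y) = der x * y + x * der y + alpha * der x * der y].

Definition is_delta_compatible (A : comPzRingType) (d : A -> A) (alpha beta : A)
  (der : A -> A) : Prop :=
  forall x, der (d x) =
    (alpha ^+ p.-1 + p%:R * beta) * d (der x) + beta * der x ^+ p
    - \sum_(1 <= nu < p) binp A nu * x ^+ (p - nu) * alpha ^+ nu.-1 * der x ^+ nu.

End Defs.

(* Main.v *)
Require Import Defs.
From HB Require Import structures.
From mathcomp Require Import all_boot all_order all_algebra.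
From mathcomp Require Import ring.
From mathcomp Require Import mpoly.
Set Implicit Arguments. Unset Strict Implicit. Unset Printing Implicit Defensive.
Import GRing.Theory.
Local Open Scope ring_scope.

Section BRing.
Variables (S : comPzRingType) (a : S).
Definition Bt : Type := let _ := a in (S * S)%type.
HB.instance Definition _ := GRing.Zmodule.on Bt.
Definition Bmul (x y : Bt) : Bt := (x.1*y.1, x.1*y.2 + x.2*y.1 + a*x.2*y.2).
Definition Bone : Bt := (1, 0).
Fact BmulA : associative Bmul.
Proof. by move=> [x1 x2] [y1 y2] [z1 z2]; rewrite /Bmul /=; congr (_,_); ring. Qed.
Fact BmulC : commutative Bmul.
Proof. by move=> [x1 x2] [y1 y2]; rewrite /Bmul /=; congr (_,_); ring. Qed.
Fact Bmul1 : left_id Bone Bmul.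
Proof. by move=> [x1 x2]; rewrite /Bmul /=; congr (_,_); ring. Qed.
Fact BmulD : left_distributive Bmul +%R.
Proof. move=> [x1 x2] [y1 y2] [z1 z2]; rewrite /Bmul /=. 
match goal with |- ?l = ?u + ?v => change (l = (u.1 + v.1, u.2 + v.2)) end.
congr (_,_) => /=; ring. Qed.
HB.instance Definition _ := GRing.Zmodule_isComPzRing.Build Bt BmulA BmulC Bmul1 BmulD.
Lemma Bt_mulE (x y : Bt) : x * y = (x.1*y.1, x.1*y.2 + x.2*y.1 + a*x.2*y.2).
Proof. by []. Qed.
Lemma Bt_oneE : (1 : Bt) = (1, 0). Proof. by []. Qed.
Lemma Bt_addE (x y : Bt) : x + y = (x.1 + y.1, x.2 + y.2). Proof. by []. Qed.
Lemma Bt_oppE (x : Bt) : - x = (- x.1, - x.2). Proof. by []. Qed.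
Lemma Bt_zeroE : (0 : Bt) = (0, 0). Proof. by []. Qed.
End BRing.

Section Delta.
Variables (p : nat) (S : comPzRingType) (a b : S).
Hypothesis p0 : (0 < p)%N.
Local Notation B := (@Bt S a).

Definition mkB (x y : S) : B := (x, y).
Definition csum (x y : S) := \sum_(1 <= i < p) binp p S i * x ^+ i * y ^+ (p - i).
Definition dBd (x y dx dy : S) : B :=
  (dx, (a ^+ p.-1 + p%:R * b) * dy + b * y ^+ p
    - \sum_(1 <= nu < p) binp p S nu * x ^+ (p - nu) * a ^+ nu.-1 * y ^+ nu).
Definition dB (d : S -> S) (X : B) : B := dBd X.1 X.2 (d X.1) (d X.2).
Definition dsum u v du dv := du + dv - csum u v.
Definition dprod (u v du dv : S) := du * v ^+ p + u ^+ p * dv + p%:R * du * dv.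
Definition cB (X Y : B) := \sum_(1 <= i < p) binp p B i * X ^+ i * Y ^+ (p - i).
Definition Fadd x y x' y' dx dy dx' dy' : B :=
  dBd (x + x') (y + y') (dsum x x' dx dx') (dsum y y' dy dy')
  - dBd x y dx dy - dBd x' y' dx' dy' + cB (mkB x y) (mkB x' y').
Definition DW x y x' y' dx dy dx' dy' :=
  dsum (x * y' + y * x') (a * y * y')
    (dsum (x * y') (y * x') (dprod x y' dx dy') (dprod y x' dy dx'))
    (dprod (a * y) y' (dprod a y (a * b) dy) dy').
Definition Fmul x y x' y' dx dy dx' dy' : B :=
  dBd (x * x') (x * y' + y * x' + a * y * y') (dprod x x' dx dx')
      (DW x y x' y' dx dy dx' dy')
  - (dBd x y dx dy * (mkB x' y') ^+ p + (mkB x y) ^+ p * dBd x' y' dx' dy'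
     + p%:R * dBd x y dx dy * dBd x' y' dx' dy').

Section WithD.
Variable d : S -> S.
Hypothesis hd : is_delta p d.
Hypothesis hda : d a = a * b.

Lemma d_add u v : d (u + v) = dsum u v (d u) (d v).
Proof. by case: hd => _ _ -> _. Qed.
Lemma d_mul u v : d (u * v) = dprod u v (d u) (d v).
Proof. by case: hd => _ _ _ ->. Qed.

Lemma Fadd_eq x y x' y' :
  Fadd x y x' y' (d x) (d y) (d x') (d y') =
  dB d ((mkB x y) + (mkB x' y')) - dB d (mkB x y) - dB d (mkB x' y') + cB (mkB x y) (mkB x' y').
Proof. by rewrite /Fadd /dB /= -!d_add. Qed.

Lemma Fmul_eq x y x' y' :
  Fmul x y x' y' (d x) (d y) (d x') (d y') =
  dB d ((mkB x y) * (mkB x' y')) - (dB d (mkB x y) * (mkB x' y') ^+ p + (mkB x y) ^+ p * dB d (mkB x' y')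
     + p%:R * dB d (mkB x y) * dB d (mkB x' y')).
Proof. by rewrite /Fmul /dB [in RHS]Bt_mulE /= !d_add !d_mul hda. Qed.

Lemma f_cB (f : {rmorphism B -> S}) X Y : f (cB X Y) = csum (f X) (f Y).
Proof.
rewrite /cB /csum rmorph_sum; apply: eq_bigr => i _.
by rewrite !rmorphM !rmorphXn /binp rmorph_nat.
Qed.

Lemma Fadd_f0 (f : {rmorphism B -> S}) (hf : forall X, f (dB d X) = d (f X))
  x y x' y' : f (Fadd x y x' y' (d x) (d y) (d x') (d y')) = 0.
Proof.
rewrite Fadd_eq !(rmorphD, rmorphB, rmorphN) !hf rmorphD d_add f_cB /dsum.
ring.
Qed.

Lemma Fmul_f0 (f : {rmorphism B -> S}) (hf : forall X, f (dB d X) = d (f X))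
  x y x' y' : f (Fmul x y x' y' (d x) (d y) (d x') (d y')) = 0.
Proof.
rewrite Fmul_eq !(rmorphD, rmorphB, rmorphN, rmorphM) !hf rmorphM.
rewrite d_mul /dprod rmorph_nat !rmorphXn; ring.
Qed.

End WithD.

Definition Bfst (X : B) : S := X.1.
Fact Bfst_add : additive Bfst. Proof. by []. Qed.
Fact Bfst_mul : multiplicative Bfst. Proof. by []. Qed.
HB.instance Definition _ := GRing.isAdditive.Build B S Bfst Bfst_add.
HB.instance Definition _ := GRing.isMultiplicative.Build B S Bfst Bfst_mul.

Definition psi2 (X : B) : S := X.1 + a * X.2.
Fact psi2_add : additive psi2.
Proof. by move=> [x1 x2] [y1 y2]; rewrite /psi2 /=; ring. Qed.
Fact psi2_mul : multiplicative psi2.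
Proof. split; last by rewrite /psi2 /= mulr0 addr0.
by move=> [x1 x2] [y1 y2]; rewrite /psi2 /=; ring. Qed.
HB.instance Definition _ := GRing.isAdditive.Build B S psi2 psi2_add.
HB.instance Definition _ := GRing.isMultiplicative.Build B S psi2 psi2_mul.

Lemma sum_rev x y : a * \sum_(1 <= nu < p) binp p S nu * x ^+ (p - nu) * a ^+ nu.-1 * y ^+ nu
  = csum x (a * y).
Proof.
rewrite mulr_sumr /csum [RHS]big_nat_rev /=; apply: eq_big_nat => i /andP[h1 h2].
rewrite add1n subSS subKn ?(ltnW h2) // /binp bin_sub ?(ltnW h2) //.
rewrite exprMn; case: i h1 h2 => // i _ _ /=; rewrite !exprS; ring.
Qed.

Section WithD2.
Variable d : S -> S.
Hypothesis hd : is_delta p d.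
Hypothesis hda : d a = a * b.

Lemma psi2_dB X : psi2 (dB d X) = d (psi2 X).
Proof.
case: X => x y; rewrite /psi2 /dB /dBd /= (d_add hd) (d_mul hd) hda /dsum /dprod -sum_rev.
have ea : a ^+ p = a * a ^+ p.-1 by rewrite -exprS prednK.
rewrite ea; ring.
Qed.

Lemma Bfst_dB X : Bfst (dB d X) = d (Bfst X).
Proof. by []. Qed.

Lemma B_eq0 (nzd : forall y, a * y = 0 -> y = 0) (Z : B) :
  Bfst Z = 0 -> psi2 Z = 0 -> Z = 0.
Proof.
case: Z => z1 z2; rewrite /Bfst /psi2 /= => -> ; rewrite add0r => /nzd -> //.
Qed.

Lemma Fadd0 (nzd : forall y, a * y = 0 -> y = 0) x y x' y' :
  Fadd x y x' y' (d x) (d y) (d x') (d y') = 0.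
Proof.
apply: B_eq0 => //.
  by apply: Fadd_f0 => // X; apply: Bfst_dB.
by apply: Fadd_f0 => // X; apply: psi2_dB.
Qed.

Lemma Fmul0 (nzd : forall y, a * y = 0 -> y = 0) x y x' y' :
  Fmul x y x' y' (d x) (d y) (d x') (d y') = 0.
Proof.
apply: B_eq0 => //.
  by apply: Fmul_f0 => // X; apply: Bfst_dB.
by apply: Fmul_f0 => // X; apply: psi2_dB.
Qed.
End WithD2.
End Delta.
Lemma binp_sum (p : nat) (R : comPzRingType) (x y : R) : prime p ->
  p%:R * \sum_(1 <= i < p) binp p R i * x ^+ i * y ^+ (p - i)
  = (x + y) ^+ p - x ^+ p - y ^+ p.
Proof.
move=> pr; have p0 := prime_gt0 pr.
rewrite [x + y]addrC exprDn -(big_mkord xpredT (fun i => y ^+ (p - i) * x ^+ i *+ 'C(p, i))).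
rewrite big_nat_recr //= [in RHS]big_ltn //= subn0 subnn bin0 binn !expr0 mulr1 mul1r.
rewrite mulr_sumr.
have -> : \sum_(1 <= i < p) p%:R * (binp p R i * x ^+ i * y ^+ (p - i)) =
          \sum_(1 <= i < p) y ^+ (p - i) * x ^+ i *+ 'C(p, i).
  apply: eq_big_nat => i /andP[h1 h2].
  rewrite /binp !mulrA -natrM mulnC divnK ?prime_dvd_bin ?h1 ?h2 //.
  by rewrite -mulr_natl; ring.
by rewrite -!addrA addrCA !addrA addrK addrK.
Qed.


Section BMap.
Variables (S S' : comPzRingType) (a : S) (f : {rmorphism S -> S'}).
Definition Bmap (X : Bt a) : Bt (f a) := (f X.1, f X.2).
Fact Bmap_add : additive Bmap.
Proof. by move=> [x1 x2] [y1 y2]; rewrite /Bmap /= !rmorphB. Qed.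
Fact Bmap_mul : multiplicative Bmap.
Proof. split; last by rewrite /Bmap /= rmorph1 rmorph0.
by move=> [x1 x2] [y1 y2]; rewrite /Bmap /= !(rmorphD, rmorphM). Qed.
HB.instance Definition _ := GRing.isAdditive.Build (Bt a) (Bt (f a)) Bmap Bmap_add.
HB.instance Definition _ := GRing.isMultiplicative.Build (Bt a) (Bt (f a)) Bmap Bmap_mul.

Variables (p : nat) (b : S).
Lemma Bmap_mkB x y : Bmap (mkB a x y) = mkB (f a) (f x) (f y).
Proof. by []. Qed.
Lemma f_csum x y : f (csum p x y) = csum p (f x) (f y).
Proof.
rewrite /csum rmorph_sum; apply: eq_bigr => i _.
by rewrite !rmorphM !rmorphXn /binp rmorph_nat.
Qed.
Lemma Bmap_dBd x y dx dy :
  Bmap (dBd p a b x y dx dy) = dBd p (f a) (f b) (f x) (f y) (f dx) (f dy).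
Proof.
rewrite /Bmap /dBd /=; congr (_, _).
rewrite !(rmorphB, rmorphD, rmorphM, rmorphXn) rmorph_nat rmorph_sum; congr (_ - _).
apply: eq_bigr => i _.
by rewrite !rmorphM !rmorphXn /binp rmorph_nat.
Qed.
Lemma Bmap_cB X Y : Bmap (cB p X Y) = cB p (Bmap X) (Bmap Y).
Proof.
rewrite /cB rmorph_sum; apply: eq_bigr => i _.
by rewrite !rmorphM !rmorphXn /binp rmorph_nat.
Qed.
Lemma f_dsum u v du dv : f (dsum p u v du dv) = dsum p (f u) (f v) (f du) (f dv).
Proof. by rewrite /dsum !(rmorphB, rmorphD) f_csum. Qed.
Lemma f_dprod u v du dv : f (dprod p u v du dv) = dprod p (f u) (f v) (f du) (f dv).
Proof. by rewrite /dprod !(rmorphD, rmorphM, rmorphXn) rmorph_nat. Qed.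

Lemma Bmap_Fadd x y x' y' dx dy dx' dy' :
  Bmap (Fadd p a b x y x' y' dx dy dx' dy') =
  Fadd p (f a) (f b) (f x) (f y) (f x') (f y') (f dx) (f dy) (f dx') (f dy').
Proof.
rewrite /Fadd !(rmorphD, rmorphB, rmorphN) /= !Bmap_dBd Bmap_cB !Bmap_mkB !f_dsum.
by rewrite !rmorphD.
Qed.
Lemma Bmap_Fmul x y x' y' dx dy dx' dy' :
  Bmap (Fmul p a b x y x' y' dx dy dx' dy') =
  Fmul p (f a) (f b) (f x) (f y) (f x') (f y') (f dx) (f dy) (f dx') (f dy').
Proof.
rewrite /Fmul !(rmorphD, rmorphB, rmorphM, rmorphXn, rmorphN) rmorph_nat /= !Bmap_dBd !Bmap_mkB.
rewrite /DW !(f_dsum, f_dprod, rmorphD, rmorphM).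
done.
Qed.
End BMap.


Section Univ.
Variable p : nat.
Hypothesis pr : prime p.
Local Notation U := {mpoly int[10]}.
Local Notation S0 := {mpoly rat[10]}.
Definition gX (R : nzRingType) (k : nat) : {mpoly R[10]} := 'X_(inord k).

Definition tgt (i : 'I_10) : S0 :=
  nth 0 [:: gX _ 4; gX _ 5; gX _ 6; gX _ 7; 0; 0; 0; 0; gX _ 8 * gX _ 9; 0] i.
Local Notation phi0 := (mmap (@mpolyC 10 rat) (fun i => 'X_i ^+ p + p%:R * tgt i)).
Definition ip : S0 := (p%:R^-1 : rat)%:MP.
Definition d0 (u : S0) := (phi0 u - u ^+ p) * ip.

Lemma gen_add (R : comPzRingType) (ip u v x y : R) :
  (u + v - (x + y) ^+ p) * ip =
  (u - x ^+ p) * ip + (v - y ^+ p) * ip - ((x + y) ^+ p - x ^+ p - y ^+ p) * ip.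
Proof. ring. Qed.
Lemma gen_mul (R : comPzRingType) (pp ip u v x y : R) : pp * ip = 1 ->
  (u * v - x ^+ p * y ^+ p) * ip =
  (u - x ^+ p) * ip * y ^+ p + x ^+ p * ((v - y ^+ p) * ip) +
     pp * ((u - x ^+ p) * ip) * ((v - y ^+ p) * ip).
Proof.
move=> h; transitivity ((u - x ^+ p) * ip * y ^+ p + x ^+ p * ((v - y ^+ p) * ip) +
     (pp * ip) * ((u - x ^+ p) * (v - y ^+ p) * ip)); first by rewrite h; ring.
ring.
Qed.

Lemma p_gt0 : (0 < p)%N. Proof. exact: prime_gt0. Qed.

Lemma hpi : p%:R * ip = 1.
Proof.
rewrite /ip -mpolyC_nat -rmorphM mulfV ?rmorph1 //.
by rewrite Num.Theory.pnatr_eq0 -lt0n p_gt0.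
Qed.

Lemma phi0X i : phi0 'X_i = 'X_i ^+ p + p%:R * tgt i.
Proof. by rewrite mmapX mmap1U. Qed.

Lemma d0X i : d0 'X_i = tgt i.
Proof. by rewrite /d0 phi0X addrAC subrr add0r mulrAC hpi mul1r. Qed.

Lemma d0_delta : is_delta p d0.
Proof.
have p0 := p_gt0.
split.
- by rewrite /d0 rmorph0 expr0n /= eqn0Ngt p0 subrr mul0r.
- by rewrite /d0 rmorph1 expr1n subrr mul0r.
- move=> x y; rewrite /d0 rmorphD.
  have -> : \sum_(1 <= i < p) binp p S0 i * x ^+ i * y ^+ (p - i) =
     ((x + y) ^+ p - x ^+ p - y ^+ p) * ip.
    by rewrite -binp_sum // mulrAC hpi mul1r.
  exact: gen_add.
- move=> x y; rewrite /d0 rmorphM exprMn; exact: gen_mul hpi.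
Qed.

Lemma gX_nat (R : nzRingType) k : gX R k = 'X_(inord k). Proof. by []. Qed.

Lemma tgt_inord k : tgt (inord k) = nth 0 [:: gX _ 4; gX _ 5; gX _ 6; gX _ 7; 0; 0; 0; 0; gX _ 8 * gX _ 9; 0] (inord k : 'I_10).
Proof. by []. Qed.

Lemma d0_gX k : (k < 10)%N -> d0 (gX _ k) =
  nth 0 [:: gX _ 4; gX _ 5; gX _ 6; gX _ 7; 0; 0; 0; 0; gX _ 8 * gX _ 9; 0] k.
Proof. by move=> hk; rewrite /gX d0X /tgt inordK. Qed.

Lemma gX_neq0 (k : nat) : gX rat k != 0.
Proof.
apply/eqP => h; have := congr1 (mcoeff U_(inord k)) h.
by rewrite /gX mcoeffX eqxx mcoeff0 => /eqP; rewrite oner_eq0.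
Qed.

Local Notation iota0 := (map_mpoly (n:=10) (intr : int -> rat)).

Lemma iota0_inj (u : U) : iota0 u = 0 -> u = 0.
Proof.
move=> h; apply/mpolyP => m; have := congr1 (mcoeff m) h.
by rewrite mcoeff_map_mpoly !mcoeff0 => /eqP; rewrite intr_eq0 => /eqP.
Qed.

Lemma iota0_gX k : iota0 (gX _ k) = gX _ k.
Proof. by rewrite /gX map_mpolyX. Qed.

Lemma FaddU : Fadd p (gX int 8) (gX int 9) (gX int 0) (gX int 1) (gX int 2) (gX int 3)
   (gX int 4) (gX int 5) (gX int 6) (gX int 7) = 0.
Proof.
set Z := Fadd _ _ _ _ _ _ _ _ _ _ _.
have : Bmap iota0 Z = 0.
  rewrite /Z Bmap_Fadd /= !iota0_gX.
  rewrite -[gX rat 4](d0_gX (k := 0)) // -[gX rat 5](d0_gX (k := 1)) //.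
  rewrite -[gX rat 6](d0_gX (k := 2)) // -[gX rat 7](d0_gX (k := 3)) //.
  apply: Fadd0 => //; first exact: p_gt0.
  - exact: d0_delta.
  - by rewrite d0_gX.
  - by move=> y /eqP; rewrite mulf_eq0 (negbTE (gX_neq0 _)) /= => /eqP.
case: Z => z1 z2; rewrite /Bmap /= => h.
have h1 := congr1 fst h; have h2 := congr1 snd h.
by rewrite (iota0_inj h1) (iota0_inj h2).
Qed.
Lemma FmulU : Fmul p (gX int 8) (gX int 9) (gX int 0) (gX int 1) (gX int 2) (gX int 3)
   (gX int 4) (gX int 5) (gX int 6) (gX int 7) = 0.
Proof.
set Z := Fmul _ _ _ _ _ _ _ _ _ _ _.
have : Bmap iota0 Z = 0.
  rewrite /Z Bmap_Fmul /= !iota0_gX.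
  rewrite -[gX rat 4](d0_gX (k := 0)) // -[gX rat 5](d0_gX (k := 1)) //.
  rewrite -[gX rat 6](d0_gX (k := 2)) // -[gX rat 7](d0_gX (k := 3)) //.
  apply: Fmul0 => //; first exact: p_gt0.
  - exact: d0_delta.
  - by rewrite d0_gX.
  - by move=> y /eqP; rewrite mulf_eq0 (negbTE (gX_neq0 _)) /= => /eqP.
case: Z => z1 z2; rewrite /Bmap /= => h.
have h1 := congr1 fst h; have h2 := congr1 snd h.
by rewrite (iota0_inj h1) (iota0_inj h2).
Qed.
End Univ.

Section DnSec.
Variables (D : comPzRingType) (nz : (1 : D) != 0).
Definition Dn : Type := D.
HB.instance Definition _ := GRing.ComPzRing.on Dn.
HB.instance Definition _ := GRing.PzSemiRing_isNonZero.Build Dn nz.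

Variables (p : nat) (pr : prime p) (a b x y x' y' dx dy dx' dy' : Dn).

Definition vals (i : 'I_10) : Dn := nth 0 [:: x; y; x'; y'; dx; dy; dx'; dy'; a; b] i.
Local Notation ev := (mmap (intr : int -> Dn) vals).

Lemma ev_gX k : (k < 10)%N -> ev (gX _ k) = nth 0 [:: x; y; x'; y'; dx; dy; dx'; dy'; a; b] k.
Proof. by move=> hk; rewrite /gX mmapX mmap1U /vals inordK. Qed.

Lemma Fadd_Dn : Fadd p a b x y x' y' dx dy dx' dy' = 0.
Proof.
have := congr1 (Bmap ev) (FaddU pr); rewrite Bmap_Fadd rmorph0 /=.
by rewrite !ev_gX.
Qed.
Lemma Fmul_Dn : Fmul p a b x y x' y' dx dy dx' dy' = 0.
Proof.
have := congr1 (Bmap ev) (FmulU pr); rewrite Bmap_Fmul rmorph0 /=.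
by rewrite !ev_gX.
Qed.
End DnSec.

Lemma Fadd_gen (p : nat) (pr : prime p) (D : comPzRingType) (a b : D)
  x y x' y' dx dy dx' dy' :
  Fadd p a b x y x' y' dx dy dx' dy' = 0.
Proof.
case: (eqVneq (1 : D) 0) => [e|nz].
  have z0 : forall z : D, z = 0 by move=> z; rewrite -[z]mulr1 e mulr0.
  by rewrite [Fadd _ _ _ _ _ _ _ _ _ _ _]surjective_pairing (z0 (Fadd _ _ _ _ _ _ _ _ _ _ _).1)
     (z0 (Fadd _ _ _ _ _ _ _ _ _ _ _).2).
exact (@Fadd_Dn D nz p pr a b x y x' y' dx dy dx' dy').
Qed.

Lemma Fmul_gen (p : nat) (pr : prime p) (D : comPzRingType) (a b : D)
  x y x' y' dx dy dx' dy' :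
  Fmul p a b x y x' y' dx dy dx' dy' = 0.
Proof.
case: (eqVneq (1 : D) 0) => [e|nz].
  have z0 : forall z : D, z = 0 by move=> z; rewrite -[z]mulr1 e mulr0.
  by rewrite [Fmul _ _ _ _ _ _ _ _ _ _ _]surjective_pairing (z0 (Fmul _ _ _ _ _ _ _ _ _ _ _).1)
     (z0 (Fmul _ _ _ _ _ _ _ _ _ _ _).2).
exact (@Fmul_Dn D nz p pr a b x y x' y' dx dy dx' dy').
Qed.


Section Ideals.
Variable A : comPzRingType.
Implicit Types (S K : A -> Prop).

Lemma span_ideal S : is_ideal (ideal_span S).
Proof.
split.
- by exists [::]; rewrite big_nil.
- move=> x y [s [hs ->]] [t [ht ->]]; exists (s ++ t); split; last by rewrite big_cat.
  by move=> ab; rewrite mem_cat => /orP[/hs|/ht].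
- move=> c x [s [hs ->]]; exists (map (fun ab => (c * ab.1, ab.2)) s); split.
    by move=> ab /mapP[ab' /hs h ->].
  by rewrite big_map mulr_sumr; apply: eq_bigr => ab _; rewrite mulrA.
Qed.

Lemma span_sub S x : S x -> ideal_span S x.
Proof.
move=> h; exists [:: (1, x)]; split; last by rewrite big_seq1 mul1r.
by move=> ab; rewrite inE => /eqP ->.
Qed.

Lemma ideal0 K : is_ideal K -> K 0. Proof. by case. Qed.
Lemma idealD K x y : is_ideal K -> K x -> K y -> K (x + y). Proof. by case=> _ h _; apply: h. Qed.
Lemma idealMl K c x : is_ideal K -> K x -> K (c * x). Proof. by case=> _ _ h; apply: h. Qed.
Lemma idealMr K c x : is_ideal K -> K x -> K (x * c).
Proof. by move=> hK hx; rewrite mulrC; apply: idealMl. Qed.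

Lemma span_min S K x : is_ideal K -> (forall y, S y -> K y) -> ideal_span S x -> K x.
Proof.
move=> hK hSK [s [hs ->]]; elim: s hs => [|ab s IH] hs; first by rewrite big_nil; apply: ideal0.
rewrite big_cons; apply: idealD => //.
  by apply: idealMl => //; apply: hSK; apply: hs; rewrite inE eqxx.
by apply: IH => ab' h; apply: hs; rewrite inE h orbT.
Qed.

Lemma pow_ideal K n : is_ideal (ideal_pow K n).
Proof. by case: n => [|n] /=; [split | apply: span_ideal]. Qed.
End Ideals.

Lemma span_pull (A B : comPzRingType) (h : {rmorphism A -> B}) (SA : A -> Prop)
  (SB : B -> Prop) : (forall x, SA x -> ideal_span SB (h x)) ->
  forall x, ideal_span SA x -> ideal_span SB (h x).
Proof.
move=> hS x; apply: (span_min (K := fun y => ideal_span SB (h y))) => //; split.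
- by rewrite rmorph0; apply: ideal0 (span_ideal _).
- by move=> u v hu hv; rewrite rmorphD; apply: idealD (span_ideal _) _ _.
- by move=> c u hu; rewrite rmorphM; apply: idealMl (span_ideal _) _.
Qed.

Section BIdeal.
Variables (D : comPzRingType) (a : D).
Local Notation B := (@Bt D a).
Definition incl (x : D) : B := (x, 0).
Fact incl_add : additive incl.
Proof. by move=> x y; rewrite /incl; congr (_, _) => /=; rewrite subrr. Qed.
Fact incl_mul : multiplicative incl.
Proof. split=> // x y; rewrite /incl Bt_mulE /=; congr (_, _); ring. Qed.
HB.instance Definition _ := GRing.isAdditive.Build D B incl incl_add.
HB.instance Definition _ := GRing.isMultiplicative.Build D B incl incl_mul.

Lemma inclE x : incl x = (x, 0). Proof. by []. Qed.
Lemma incl_mulE (c : D) (X : B) : incl c * X = (c * X.1, c * X.2).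
Proof. by rewrite Bt_mulE /=; congr (_, _); ring. Qed.
Lemma natB n : (n%:R : B) = (n%:R, 0).
Proof. by rewrite -[RHS]/(incl n%:R) rmorph_nat. Qed.
Definition TB : B := (0, 1).
Lemma B_decomp (X : B) : X = incl X.1 + TB * incl X.2.
Proof. by case: X => x y; rewrite Bt_mulE /= /incl; congr (_, _) => /=; ring. Qed.

Definition cset (K : D -> Prop) (X : B) := K X.1 /\ K X.2.
Lemma cset_ideal K : is_ideal K -> is_ideal (cset K).
Proof.
move=> hK; split.
- by split; apply: ideal0.
- move=> [x1 x2] [y1 y2] [h1 h2] [h3 h4]; rewrite /cset Bt_addE /=.
  by split; apply: (idealD hK).
- move=> [u v] [x1 x2] [h1 h2]; rewrite /cset Bt_mulE /=; split; first exact: (idealMl _ hK).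
  by apply: (idealD hK); [apply: (idealD hK)|]; apply: (idealMl _ hK).
Qed.

Lemma span_coord (SD : D -> Prop) (SB : B -> Prop) :
  (forall X, SB X -> cset (ideal_span SD) X) ->
  (forall x, SD x -> ideal_span SB (incl x)) ->
  forall X, ideal_span SB X <-> cset (ideal_span SD) X.
Proof.
move=> h1 h2 X; split.
  by apply: (span_min (K := cset (ideal_span SD))) => //; apply: cset_ideal; apply: span_ideal.
case=> hx1 hx2; rewrite (B_decomp X); apply: idealD; first exact: span_ideal.
  exact: (span_pull h2 hx1).
apply: idealMl; first exact: span_ideal.
exact: (span_pull h2 hx2).
Qed.
End BIdeal.

Section Prism.
Variables (p : nat) (pr : prime p) (R D : comPzRingType) (dR : R -> R) (I : R -> Prop)
  (dD : D -> D) (fD : {rmorphism R -> D}) (a b : D).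
Hypothesis hD : is_bounded_prism_over p dR I dD fD.
Hypothesis hda : dD a = a * b.
Local Notation B := (@Bt D a).
Local Notation dB' := (@dB p _ a b dD).

Definition fB (r : R) : B := incl a (fD r).
Fact fB_add : additive fB.
Proof. by move=> x y; rewrite /fB !rmorphB. Qed.
Fact fB_mul : multiplicative fB.
Proof. by split=> [x y|]; rewrite /fB !(rmorphM, rmorph1). Qed.
HB.instance Definition _ := GRing.isAdditive.Build R B fB fB_add.
HB.instance Definition _ := GRing.isMultiplicative.Build R B fB fB_mul.

Local Notation ID := (ext_ideal fD I).
Local Notation IB := (ext_ideal fB I).
Local Notation KD := (ideal_span (fun y => y = p%:R \/ ID y)).
Local Notation KB := (ideal_span (fun y => y = p%:R \/ IB y)).

Lemma p0 : (0 < p)%N. Proof. exact: prime_gt0. Qed.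

Lemma hdD : is_delta p dD. Proof. by case: hD => [[]]. Qed.

Lemma IB_iff X : IB X <-> cset ID X.
Proof.
apply: span_coord.
- move=> Y [r [hr ->]]; split; first by apply: span_sub; exists r.
  exact: ideal0 (span_ideal _).
- by move=> y [r [hr ->]]; apply: span_sub; exists r.
Qed.

Lemma KB_iff X : KB X <-> cset KD X.
Proof.
apply: span_coord.
- move=> Y [->|/IB_iff [h1 h2]].
    rewrite natB; split; first by apply: span_sub; left.
    exact: ideal0 (span_ideal _).
  by split; apply: span_sub; right.
- move=> y [->|hy]; apply: span_sub.
    by left; rewrite rmorph_nat.
  right; apply/IB_iff; split => //; exact: ideal0 (span_ideal _).
Qed.

Lemma pow_iff n X : ideal_pow KB n X <-> cset (ideal_pow KD n) X.
Proof.
elim: n X => [|n IH] X; first by [].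
apply: span_coord.
- move=> Y [u [v [/KB_iff [hu1 hu2] [/IH [hv1 hv2] ->]]]]; rewrite /cset Bt_mulE /=.
  have hI := span_ideal (fun y => exists a0 b0, KD a0 /\ ideal_pow KD n b0 /\ y = a0 * b0).
  split; first by apply: span_sub; exists u.1, v.1.
  apply: (idealD hI); first apply: (idealD hI).
  + by apply: span_sub; exists u.1, v.2.
  + by apply: span_sub; exists u.2, v.1; rewrite mulrC.
  + by apply: span_sub; exists (a * u.2), v.2; split => //; apply: (idealMl _ (span_ideal _)).
- move=> y [u [v [hu [hv ->]]]]; apply: span_sub; exists (incl a u), (incl a v).
  split; first by apply/KB_iff; split => //; exact: ideal0 (span_ideal _).
  split; first by apply/IH; split => //; exact: ideal0 (pow_ideal _ _).
  by rewrite rmorphM.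
Qed.

Lemma sum0 (x : D) :
  \sum_(1 <= nu < p) binp p D nu * x ^+ (p - nu) * a ^+ nu.-1 * 0 ^+ nu = 0.
Proof.
rewrite big_nat; apply: big1 => i /andP[h1 _].
by rewrite expr0n gtn_eqF // mulr0.
Qed.

Lemma hd0 : dD 0 = 0. Proof. by case: hdD. Qed.
Lemma hd1 : dD 1 = 0. Proof. by case: hdD. Qed.

Lemma dB_incl x : dB' (incl a x) = incl a (dD x).
Proof.
rewrite /dB /dBd /= /incl; congr (_, _).
by rewrite hd0 expr0n gtn_eqF ?p0 // sum0 mulr0 /= mulr0 addr0 subr0.
Qed.

Lemma dB_delta : is_delta p dB'.
Proof.
split.
- have -> : (0 : B) = incl a 0 by rewrite rmorph0.
  by rewrite dB_incl hd0 rmorph0.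
- have -> : (1 : B) = incl a 1 by rewrite rmorph1.
  by rewrite dB_incl hd1 rmorph0.
- move=> X Y.
  have := Fadd_gen pr a b X.1 X.2 Y.1 Y.2 (dD X.1) (dD X.2) (dD Y.1) (dD Y.2).
  rewrite (Fadd_eq a b hdD) /mkB -!surjective_pairing => h.
  move: h; rewrite /cB; move: (dB' (X + Y)) (dB' X) (dB' Y) (\sum_(1 <= i < p) _) => u v w c e.
  by apply/eqP; rewrite -subr_eq0 -e; apply/eqP; ring.
- move=> X Y.
  have := Fmul_gen pr a b X.1 X.2 Y.1 Y.2 (dD X.1) (dD X.2) (dD Y.1) (dD Y.2).
  rewrite (Fmul_eq hdD hda) /mkB -!surjective_pairing.
  exact: subr0_eq.
Qed.

Lemma incl_exp x n : incl a x ^+ n = incl a (x ^+ n). Proof. by rewrite rmorphXn. Qed.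

Lemma ID0 : ID 0. Proof. exact: ideal0 (span_ideal _). Qed.

Lemma B_prism : is_bounded_prism_over p dR I dB' fB.
Proof.
case: hD => [[hdel [hid [[fs [hsum hfs]] [[hsep hcpl] [hps [N hN]]]]]] hmap].
split; last first.
  by move=> r; change (incl a (fD (dR r)) = dB' (incl a (fD r))); rewrite hmap dB_incl.
split; first exact: dB_delta.
split; first exact: span_ideal.
split.
  exists (map (fun t => (incl a t.1.1, incl a t.1.2, incl a t.2)) fs); split.
    have -> : (1 : B) = incl a 1 by rewrite rmorph1.
    rewrite -hsum rmorph_sum big_map; apply: eq_bigr => t _ /=.
    by rewrite rmorphM.
  move=> t' /mapP [t ht ->] /=; have [hI hdiv hnzd] := hfs t ht.
  split.
  - by apply/IB_iff; split => //; exact: ID0.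
  - move=> X /IB_iff [h1 h2].
    have [m1 [y1 e1]] := hdiv _ h1; have [m2 [y2 e2]] := hdiv _ h2.
    exists (m1 + m2)%N, (t.1.1 ^+ m2 * y1, t.1.1 ^+ m1 * y2).
    rewrite incl_exp incl_mulE [RHS]mulrC incl_mulE /=; congr (_, _); rewrite exprD.
      by rewrite mulrAC e1; ring.
    by rewrite -mulrA e2; ring.
  - move=> Y; rewrite incl_mulE => h0.
    have h1 := congr1 fst h0; have h2 := congr1 snd h0; rewrite /= in h1 h2.
    have [m1 e1] := hnzd _ h1; have [m2 e2] := hnzd _ h2.
    exists (m1 + m2)%N; rewrite incl_exp incl_mulE exprD.
    by rewrite mulrAC e1 mul0r -mulrA e2 mulr0.
split.
  split.
    move=> X hX; have h := fun n => (pow_iff n X).1 (hX n).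
    rewrite [X]surjective_pairing (hsep X.1 (fun n => (h n).1)) (hsep X.2 (fun n => (h n).2)).
    by [].
  move=> u hu; have h := fun n => (pow_iff n _).1 (hu n).
  have [x1 hx1] := hcpl (fun n => (u n).1) (fun n => (h n).1).
  have [x2 hx2] := hcpl (fun n => (u n).2) (fun n => (h n).2).
  by exists (x1, x2) => n; apply/pow_iff; split; [exact: hx1|exact: hx2].
split.
  have -> : (p%:R : B) = incl a p%:R by rewrite rmorph_nat.
  apply: (span_pull _ hps) => y [hy | [i [hi ->]]].
    by apply: span_sub; left; apply/IB_iff; split => //; exact: ID0.
  apply: span_sub; right; exists (incl a i); split.
    by apply/IB_iff; split => //; exact: ID0.
  by rewrite /frob rmorphD rmorphM rmorphXn rmorph_nat dB_incl.
exists N => X [m hm].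
have e k : (p%:R : B) ^+ k * X = (p%:R ^+ k * X.1, p%:R ^+ k * X.2).
  by rewrite -incl_mulE rmorphXn rmorph_nat.
move: hm; rewrite e => /IB_iff [h1 h2]; apply/IB_iff; rewrite e; split; apply: hN.
  by exists m.
by exists m.
Qed.
End Prism.


Section DerMorph.
Variables (R A D : comPzRingType) (fA : R -> A) (a : D) (g : {rmorphism A -> D})
  (alpha : A) (der : A -> A).
Hypothesis ga : g alpha = a.
Hypothesis hder : is_alpha_derivation fA alpha der.

Lemma der_add x y : der (x + y) = der x + der y. Proof. by case: hder. Qed.
Lemma der0 : der 0 = 0.
Proof.
have := der_add 0 0; rewrite addr0 => h.
by have := congr1 (fun z => z - der 0) h; rewrite subrr addrK => /esym.
Qed.
Lemma der_sub x y : der (x - y) = der x - der y.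
Proof.
have := der_add (x - y) y; rewrite subrK => ->; by rewrite addrK.
Qed.
Lemma der1 : der 1 = 0. Proof. by case: hder. Qed.
Lemma der_mul x y : der (x * y) = der x * y + x * der y + alpha * der x * der y.
Proof. by case: hder. Qed.
Lemma der_f r : der (fA r) = 0.
Proof. by case: hder => _ h _ _; rewrite -[fA r]mulr1 h der1 mulr0. Qed.

Definition hmor (x : A) : Bt a := let _ := ga in let _ := hder in (g x, g (der x)).
Fact hmor_add : additive hmor.
Proof. by move=> x y; rewrite /hmor /= der_sub !rmorphB. Qed.
Fact hmor_mul : multiplicative hmor.
Proof.
split; last by rewrite /hmor /= der1 rmorph1 rmorph0.
move=> x y; rewrite /hmor /= Bt_mulE /= der_mul !(rmorphD, rmorphM) ga; congr (_, _); ring.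
Qed.
HB.instance Definition _ := GRing.isAdditive.Build A (Bt a) hmor hmor_add.
HB.instance Definition _ := GRing.isMultiplicative.Build A (Bt a) hmor hmor_mul.

Variables (p : nat) (dA : A -> A) (dD : D -> D) (beta : A) (b : D).
Hypothesis gb : g beta = b.
Hypothesis gdelta : is_delta_map dA dD g.
Hypothesis hcomp : is_delta_compatible p dA alpha beta der.

Lemma hmor_delta x : hmor (dA x) = dB p b dD (hmor x).
Proof.
rewrite /hmor /dB /dBd /= gdelta; congr (_, _).
rewrite hcomp !(rmorphB, rmorphD, rmorphM, rmorphXn) rmorph_nat rmorph_sum ga gb gdelta.
congr (_ - _); apply: eq_bigr => i _.
by rewrite !(rmorphM, rmorphXn) /binp rmorph_nat ga.
Qed.
End DerMorph.

Theorem proposition6p15 (p : nat) (hp : prime p)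
  (R A D : comPzRingType) (dR : R -> R) (I : R -> Prop)
  (dA : A -> A) (fA : {rmorphism R -> A}) (J : A -> Prop)
  (dD : D -> D) (fD : {rmorphism R -> D}) (g : {rmorphism A -> D}) :
  is_bounded_prism p dR I ->
  is_delta_pair_over p dR I dA fA J ->
  is_bounded_prismatic_envelope p dR I dA fA J dD fD g ->
  forall alpha beta : A, dA alpha = alpha * beta ->
  forall der : A -> A,
    is_alpha_derivation fA alpha der ->
    is_delta_compatible p dA alpha beta der ->
    (forall x, J x -> J (der x)) ->
    exists der' : D -> D,
      [/\ is_alpha_derivation fD (g alpha) der',
          is_delta_compatible p dD (g alpha) (g beta) der',
          (forall x, der' (g x) = g (der x))
        & forall der'' : D -> D,
            is_alpha_derivation fD (g alpha) der'' ->
            is_delta_compatible p dD (g alpha) (g beta) der'' ->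
            (forall x, der'' (g x) = g (der x)) ->
            forall y, der'' y = der' y].
Proof.
move=> _ _ [hDp hgd hgf hgJ huniv] alpha beta hab der hder hcomp hJ.
set a := g alpha; set b := g beta.
have hda : dD a = a * b by rewrite /a /b -hgd hab rmorphM.
have hB := B_prism hp hDp hda.
have hdeltaD : is_delta p dD by case: hDp => [[]].
have ga : g alpha = a by [].
have gb : g beta = b by [].
have hh1 : is_delta_map dA (dB p b dD) (hmor ga hder).
  by move=> x; apply: hmor_delta.
have hh2 : forall r, hmor ga hder (fA r) = fB fD a r.
  by move=> r; rewrite /hmor /fB /incl /= (der_f hder) hgf rmorph0.
have hh3 : forall x, J x -> ext_ideal (fB fD a) I (hmor ga hder x).
  by move=> x hx; apply/IB_iff; split; apply: hgJ => //; apply: hJ.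
have [h' [h'd h'f h'g h'u]] := huniv (Bt a) (dB p b dD) _ _ hB hh1 hh2 hh3.
have fstD : forall y, (h' y).1 = y.
  have [h0 [_ _ _ h0u]] := huniv D dD fD g hDp hgd hgf hgJ.
  move=> y.
  have e1 : (@Bfst D a \o h') y = h0 y.
    apply: h0u.
    - by move=> x /=; rewrite h'd.
    - by move=> r /=; rewrite h'f.
    - by move=> x /=; rewrite h'g.
  have e2 : idfun y = h0 y.
    by apply: h0u.
  by transitivity (h0 y); [exact: e1 | exact: (esym e2)].
exists (fun y => (h' y).2); split.
- split.
  + by move=> x y; rewrite rmorphD.
  + by move=> r x; rewrite rmorphM h'f /fB incl_mulE.
  + by rewrite rmorph1.
  + by move=> x y; rewrite rmorphM Bt_mulE /= !fstD; ring.
- by move=> x; rewrite h'd /dB /dBd /= !fstD.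
- by move=> x; rewrite h'g.
move=> der'' hd'' hc'' hg'' y.
have ga'' : (idfun : D -> D) a = a by [].
have gb'' : (idfun : D -> D) b = b by [].
have e := h'u (hmor ga'' hd'') _ _ _ y.
rewrite -e //.
- by move=> x; apply: hmor_delta.
- move=> r; change ((fD r, der'' (fD r)) = (fD r, 0) :> Bt a).
  by rewrite (der_f hd'').
- by move=> x; change ((g x, der'' (g x)) = (g x, g (der x)) :> Bt a); rewrite hg''.
Qed.
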